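(* Let $n\geq 3$ be an integer and let $\varepsilon>0$ satisfy $\varepsilon<1/n$ if $n$ is odd, and $\varepsilon<2/n$ if $n$ is even. Assume there exists a real orthogonal $n\times n$ matrix $M=(m_{j,k})$ such that for every $j,k=1,\dots,n$, $$\left(\frac{1-\varepsilon}{n}\right)^{1/2}\leq |m_{j,k}|\leq \left(\frac{1+\varepsilon}{n}\right)^{1/2}.$$ Then $n$ is a multiple of $4$ and there exists a Hadamard matrix of order $n$.
   Context: A Hadamard matrix of order $n$ is an $n\times n$ matrix with entries in $\{+1,-1\}$ whose rows are pairwise orthogonal. *)

(* Defs.v *)
From mathcomp Require Import all_boot all_order all_algebra.
From mathcomp Require Import reals.
Set Implicit Arguments. Unset Strict Implicit. Unset Printing Implicit Defensive.
Import Order.TTheory GRing.Theory Num.Theory.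
Local Open Scope ring_scope.

Definition is_hadamard (n : nat) (H : 'M[int]_n) : Prop :=
  (forall i j, H i j = 1 \/ H i j = -1) /\
  (forall i i', i != i' -> \sum_(k < n) H i k * H i' k = 0).

Definition orthogonal_mx (R : ringType) (n : nat) (M : 'M[R]_n) : Prop :=
  M *m M^T = 1%:M.

(* Main.v *)
Require Import Defs.
From mathcomp Require Import all_boot all_order all_algebra.
From mathcomp Require Import reals.
From mathcomp Require Import zify ring lra.
Import Order.TTheory GRing.Theory Num.Theory.
Local Open Scope ring_scope.

Lemma had4 (n : nat) (H : 'M[int]_n) : (3 <= n)%N -> is_hadamard H -> (4 %| n)%N.
Proof.
case: n H => [|[|[|n]]] H // _ [Hpm Hor].
pose a : 'I_n.+3 := inord 0; pose b : 'I_n.+3 := inord 1; pose c : 'I_n.+3 := inord 2.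
have ab : a != b by apply/eqP => /(congr1 val); rewrite /= !inordK.
have ac : a != c by apply/eqP => /(congr1 val); rewrite /= !inordK.
have bc : b != c by apply/eqP => /(congr1 val); rewrite /= !inordK.
pose w k : int := if (H a k == H b k) && (H a k == H c k) then 1 else 0.
have Hw : forall k, (H a k + H b k) * (H a k + H c k) = 4 * w k.
  move=> k; rewrite /w.
  by case: (Hpm a k) => ->; case: (Hpm b k) => ->; case: (Hpm c k) => ->.
have Ha2 : forall k, H a k * H a k = 1.
  by move=> k; case: (Hpm a k) => ->.
have : \sum_k (H a k + H b k) * (H a k + H c k) = (n.+3)%:R.
  under eq_bigr => k _ do rewrite mulrDl !mulrDr Ha2.
  rewrite !big_split /= Hor //.
  rewrite (eq_bigr (fun k => H a k * H b k) (F1 := fun k => H b k * H a k)) => [|k _]; last by rewrite mulrC.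
  rewrite Hor // Hor // sumr_const card_ord.
  by rewrite !addr0.
under eq_bigr => k _ do rewrite Hw.
rewrite -mulr_sumr => E; have E2 : (n.+3)%:Z = 4 * \sum_i w i by rewrite E natz.
lia.
Qed.

Theorem proposition2p1 (R : realType) (n : nat) (eps : R) :
  (3 <= n)%N ->
  0 < eps ->
  (if odd n then eps < 1 / n%:R else eps < 2 / n%:R) ->
  (exists M : 'M[R]_n,
      orthogonal_mx M /\
      forall j k : 'I_n,
        Num.sqrt ((1 - eps) / n%:R) <= `|M j k| <= Num.sqrt ((1 + eps) / n%:R)) ->
  (4 %| n)%N /\ exists H : 'M[int]_n, is_hadamard H.
Proof.
move=> n3 eps0 Heps [M [HM Hb]]; rewrite /orthogonal_mx in HM.
have npos : (0 : R) < n%:R by rewrite ltr0n; lia.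
have n3R : (3 : R) <= n%:R by rewrite (ler_nat R 3 n).
have eps2 : eps < 2 / n%:R.
  case: (odd n) Heps => // H1; apply: (lt_trans H1).
  by rewrite ltr_pM2r ?invr_gt0 // ltr1n.
have eps1 : eps < 1.
  apply: (lt_trans eps2); rewrite ltr_pdivrMr //; lra.
set c := (n%:R : R)^-1.
have c0 : 0 < c by rewrite invr_gt0.
have cn : c * n%:R = 1 by rewrite mulVf // gt_eqF.
pose S : 'M[int]_n := \matrix_(i, j) if 0 <= M i j then 1 else -1.
have Spm : forall i j, S i j = 1 \/ S i j = -1.
  by move=> i j; rewrite mxE; case: ifP => _; [left|right].
have HS : forall i j, (S i j)%:~R * `|M i j| = M i j.
  move=> i j; rewrite mxE; case: (leP 0 (M i j)) => h.
    by rewrite mul1r ger0_norm.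
  by rewrite ltr0_norm // mulrN mulN1r opprK.
have Hlo : forall i i' k, (1 - eps) * c <= `|M i k| * `|M i' k|.
  move=> i i' k.
  have x0 : 0 <= (1 - eps) * c by apply: mulr_ge0; lra.
  rewrite -[X in X <= _](sqr_sqrtr x0) expr2.
  apply: ler_pM; rewrite ?sqrtr_ge0 //.
    by case/andP: (Hb i k).
  by case/andP: (Hb i' k).
have Hhi : forall i i' k, `|M i k| * `|M i' k| <= (1 + eps) * c.
  move=> i i' k.
  have x0 : 0 <= (1 + eps) * c by apply: mulr_ge0; lra.
  rewrite -[X in _ <= X](sqr_sqrtr x0) expr2.
  apply: ler_pM; rewrite ?normr_ge0 //.
    by case/andP: (Hb i k).
  by case/andP: (Hb i' k).
have Hort : forall i i' : 'I_n, i != i' -> \sum_k S i k * S i' k = 0.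
  move=> i i' ii'.
  have orth : \sum_k M i k * M i' k = 0.
    have := congr1 (fun A : 'M[R]_n => A i i') HM; rewrite !mxE /= (negbTE ii') /= => E; rewrite mulr0n in E; rewrite -[RHS]E.
    by apply: eq_bigr => k _; rewrite mxE.
  set T := \sum_k S i k * S i' k.
  have Hreal : (T%:~R : R) * c = \sum_k ((S i k * S i' k)%:~R * (c - `|M i k| * `|M i' k|)).
    rewrite rmorph_sum /= mulr_suml.
    have -> : \sum_k ((S i k * S i' k)%:~R : R) * c = 
      \sum_k ((S i k * S i' k)%:~R * (c - `|M i k| * `|M i' k|)) + \sum_k M i k * M i' k.
      rewrite -big_split /=; apply: eq_bigr => k _.
      rewrite -[M i k * M i' k](congr2 *%R (HS i k) (HS i' k)) intrM; ring.
    by rewrite orth addr0.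
  have Hbnd : `|(T%:~R : R)| * c <= eps.
    have -> : `|(T%:~R : R)| * c = `|(T%:~R : R) * c| by rewrite normrM (ger0_norm (ltW c0)).
    rewrite Hreal.
    apply: (le_trans (ler_norm_sum _ _ _)).
    apply: (@le_trans _ _ (\sum_(k < n) eps * c)).
      apply: ler_sum => k _; rewrite normrM.
      have -> : `|((S i k * S i' k)%:~R : R)| = 1.
        by case: (Spm i k) => ->; case: (Spm i' k) => ->; rewrite /= ?normrN normr1.
      rewrite mul1r ler_norml; have := Hlo i i' k; have := Hhi i i' k.
      move=> h1 h2; apply/andP; split; lra.
    by rewrite sumr_const card_ord -mulr_natr -mulrA cn mulr1.
  have HT : `|(T%:~R : R)| <= eps * n%:R.
    have -> : `|(T%:~R : R)| = `|(T%:~R:R)| * c * n%:R by rewrite -mulrA cn mulr1.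
    by rewrite ler_pM2r.
  pose u k : int := if S i k * S i' k == 1 then 0 else -1.
  have Hu : forall k, S i k * S i' k = 1 + 2 * u k.
    by move=> k; rewrite /u; case: (Spm i k) => ->; case: (Spm i' k) => ->.
  have TU : T = n%:Z + 2 * \sum_k u k.
    rewrite /T (eq_bigr _ (fun k _ => Hu k)) big_split /= sumr_const card_ord -mulr_sumr.
    by congr (_ + _); exact: natz.
  have hnd := odd_double_half n.
  have hTn : (`|T| < 2)%R.
    rewrite -(ltr_int R) intr_norm; apply: (le_lt_trans HT).
    by rewrite -ltr_pdivlMr.
  move: hTn; rewrite ltr_norml => /andP [hT1 hT2].
  case Ho : (odd n) Heps hnd => Heps hnd.
    have hTn : (`|T| < 1)%R.
      rewrite -(ltr_int R) intr_norm; apply: (le_lt_trans HT).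
      by rewrite -ltr_pdivlMr.
    move: hTn; rewrite ltr_norml => /andP [hT3 hT4].
    rewrite -muln2 in hnd; lia.
  rewrite -muln2 in hnd; lia.
have HH : is_hadamard S by split.
split; last by exists S.
exact: (@had4 n S n3 HH).
Qed.
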